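(* For $X>0$ let $N^*(X)$ be the number of finite tuples $(d_1,\dots,d_j)$ (with $j\ge1$ arbitrary, depending on the tuple) of natural numbers $d_k\ge1$ such that $\prod_{k=1}^j(3d_k)\le X$. Then $N^*(X)=0$ for $X<3$, and for every $X>0$, $$N^*(X)\le \Big(\frac X3\Big)^{5/3}.$$ *)

(* Defs.v *)
From mathcomp Require Import all_boot all_order all_algebra.
From mathcomp Require Import all_classical all_reals all_analysis.
Set Implicit Arguments. Unset Strict Implicit. Unset Printing Implicit Defensive.
Import Order.TTheory GRing.Theory Num.Theory.
Local Open Scope ring_scope.

(* The tuple (d_1,...,d_j) (j >= 1, d_k >= 1 natural numbers) is counted by
   N^*(X) iff prod_k (3 d_k) <= X.  Such a tuple automatically has length
   j <= X and entries d_k <= X (since 3 d_k >= 3 > 1 and d_k <= 3 d_k <= X),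
   hence j <= K and d_k <= K with K := floor(X) = Num.truncn X.  So N^*(X) is
   exactly the number of tuples of length j in [1, K] with entries in 'I_K.+1
   = {0,..,K} satisfying the conditions. *)
Definition good_tuple (R : realType) (X : R) (s : seq nat) : bool :=
  all (fun d => 0 < d)%N s && (((\prod_(d <- s) (3 * d))%N)%:R <= X).

Definition Nstar (R : realType) (X : R) : nat :=
  let K := Num.truncn X in
  (\sum_(1 <= j < K.+1)
     #|[set t : j.-tuple 'I_K.+1 | good_tuple X (map val t)]|)%N.

(* Main.v *)
Require Import Defs.
From mathcomp Require Import all_boot all_order all_algebra.
From mathcomp Require Import all_classical all_reals all_analysis.
From mathcomp Require Import zify ring lra.
Import Order.TTheory GRing.Theory Num.Theory.
Set Implicit Arguments. Unset Strict Implicit. Unset Printing Implicit Defensive.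

Definition goodn (M : nat) (s : seq nat) : bool :=
  all (fun d => 0 < d)%N s && (\prod_(d <- s) (3 * d) <= M)%N.

Definition cnt (B j M : nat) : nat :=
  \sum_(t : j.-tuple 'I_B) (goodn M (map val t) : nat).

Definition S (B J M : nat) : nat := \sum_(j < J) cnt B j.+1 M.

Lemma card_cnt B j M :
  #|[set t : j.-tuple 'I_B | goodn M (map val t)]| = cnt B j M.
Proof.
rewrite -sum1_card big_mkcond /=; apply: eq_bigr => t _.
by rewrite inE; case: goodn.
Qed.

Lemma prod_pos (s : seq nat) : all (fun d => 0 < d)%N s -> (0 < \prod_(d <- s) (3 * d))%N.
Proof.
elim: s => [|x s IH]; first by rewrite big_nil.
by rewrite /= big_cons => /andP [x0 /IH h]; rewrite !muln_gt0 x0 h.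
Qed.

Lemma cnt0 B j : cnt B j 0 = 0.
Proof.
apply: big1 => t _; rewrite /goodn.
case H: all => //=; by rewrite leqNgt prod_pos.
Qed.

Lemma cnt_rec B j M :
  cnt B j.+1 M = \sum_(x : 'I_B | (0 < x)%N) cnt B j (M %/ (3 * x)).
Proof.
rewrite /cnt.
rewrite (reindex (fun p : 'I_B * j.-tuple 'I_B => [tuple of p.1 :: p.2])) /=; last first.
  exists (fun t => (thead t, [tuple of behead t])).
    by case=> x t _ /=; congr pair; apply: val_inj.
  by move=> t _; rewrite [RHS]tuple_eta.
rewrite -(pair_big xpredT xpredT (fun x (t : j.-tuple 'I_B) => (goodn M (map val (x :: t)) : nat))) /=.
rewrite (bigID (fun x : 'I_B => (0 < x)%N)) /=.
rewrite [X in (_ + X)%N]big1 ?addn0; last first.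
  move=> x; rewrite -eqn0Ngt => /eqP x0; apply: big1 => t _.
  by rewrite /goodn /= x0.
apply: eq_bigr => x x0; apply: eq_bigr => t _.
rewrite /goodn /= x0 /= big_cons leq_divRL ?muln_gt0 // mulnC.
by [].
Qed.

Lemma S_rec B J M :
  S B J.+1 M = (cnt B 1 M + \sum_(x : 'I_B | (0 < x)%N) S B J (M %/ (3 * x)))%N.
Proof.
rewrite /S big_ord_recl /=; congr addn.
under eq_bigr do rewrite cnt_rec.
by rewrite exchange_big.
Qed.

Lemma S_small B J m : (m < 3)%N -> S B J m = 0.
Proof.
move=> m3; apply: big1 => j _; rewrite cnt_rec; apply: big1 => x x0.
rewrite divn_small ?cnt0 //.
apply: (leq_trans m3); by rewrite leq_pmulr.
Qed.

Lemma count_le B q :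
  (\sum_(x < B) ((0 < x) && (x <= q))%N = minn B.-1 q)%N.
Proof.
elim: B => [|B IH]; first by rewrite big_ord0 min0n.
rewrite big_ord_recr /= IH.
case: B {IH} => [|n] /=; first by rewrite min0n.
case: (leqP n.+1 q) => h /=.
all: lia.
Qed.

Lemma cnt_0 B m : cnt B 0 m = (0 < m)%N.
Proof.
rewrite /cnt (big_pred1 [tuple]) /=; first by rewrite /goodn big_nil.
by move=> t; rewrite /= (tuple0 t); apply/esym/eqP.
Qed.

Lemma cnt1_le B M : (cnt B 1 M <= M %/ 3)%N.
Proof.
rewrite cnt_rec.
apply: (@leq_trans (\sum_(x < B) ((0 < x) && (x <= M %/ 3))%N)); last first.
  by rewrite count_le geq_minr.
rewrite [X in (_ <= X)%N](bigID (fun x : 'I_B => (0 < x)%N)) /= -[X in (X <= _)%N]addn0.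
apply: leq_add; last by [].
apply: leq_sum => x x0; rewrite x0 /= cnt_0.
rewrite divnMA divn_gt0 //.
Qed.

Local Open Scope ring_scope.
Section R.
Variable R : realType.

Lemma key_ineq (a b : R) : 1 <= a -> 0 <= b -> b ^+ 2 = a ^+ 2 + 1 ->
  a + 2 * a * b ^+ 2 <= 2 * b ^+ 3.
Proof.
move=> a1 b0 e.
have h2 : (a + 2*a*b^+2)^+2 <= (2*b^+3)^+2.
  have -> : (2*b^+3)^+2 = 4*(b^+2)^+3 by ring.
  have -> : (a + 2*a*b^+2)^+2 = a^+2*(1+2*b^+2)^+2 by ring.
  rewrite e. set c := a ^+ 2.
  have : 0 <= c by rewrite /c exprn_ge0 //; lra.
  move=> c0. nra.
have L0 : 0 <= a + 2*a*b^+2 by have := exprn_ge0 2 b0; nra.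
have R0 : 0 <= 2*b^+3 by have := exprn_ge0 3 b0; nra.
move: h2 L0 R0; set L := a + 2*a*b^+2; set Rr := 2*b^+3 => h2 L0 R0.
nra.
Qed.

Definition g (x : nat) : R := (x%:R * Num.sqrt x%:R)^-1.

Lemma tele n : \sum_(x < n.+2) (if (0 < x)%N then g x else 0) <= 3 - 2 / Num.sqrt (n.+1)%:R.
Proof.
elim: n => [|n IH].
  rewrite big_ord_recr big_ord_recr big_ord0 /= /g sqrtr1 mulr1 invr1; lra.
rewrite big_ord_recr /=.
move: IH; set a := Num.sqrt (n.+1)%:R; set b := Num.sqrt (n.+2)%:R => IH.
have a0 : 0 <= a by apply: sqrtr_ge0.
have b0 : 0 <= b by apply: sqrtr_ge0.
have ea : a ^+ 2 = (n.+1)%:R by rewrite sqr_sqrtr.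
have eb : b ^+ 2 = (n.+2)%:R by rewrite sqr_sqrtr.
have eab : b ^+ 2 = a ^+ 2 + 1 by rewrite ea eb -natr1.
have a1 : 1 <= a.
  have : (1 : R) <= (n.+1)%:R by rewrite ler1n.
  rewrite -ea; nra.
have b1 : 1 <= b by nra.
apply: (le_trans (lerD IH (lexx _))).
rewrite /g -/b -eb.
have k := @key_ineq a b a1 b0 eab.

rewrite -subr_ge0.
have -> : 3 - 2 / b - (3 - 2 / a + (b ^+ 2 * b)^-1) = (2 * b ^+ 3 - (a + 2 * a * b ^+ 2)) / (a * b ^+ 3).
  field. apply/andP; split; apply/negP => /eqP h; rewrite h in a1 b1; lra.
apply: divr_ge0; first lra.
apply: mulr_ge0 => //; exact: exprn_ge0.
Qed.

Lemma term_le (x : nat) : (0 < x)%N -> ((x%:R : R) `^ (5/3))^-1 <= g x.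
Proof.
move=> x0.
have x1 : (1 : R) <= x%:R by rewrite ler1n.
have xs : 0 < Num.sqrt (x%:R : R) by rewrite sqrtr_gt0; lra.
have xp : (0 : R) < x%:R by lra.
have p0 : 0 < (x%:R : R) `^ (5/3) by rewrite powR_gt0.
rewrite /g ler_pV2 ?inE ?unitfE; first last.
- by rewrite mulf_neq0 ?gt_eqF // mulr_gt0.
- by rewrite gt_eqF.
rewrite -powR12_sqrt; last lra.
rewrite -{1}(powRr1 (a:=x%:R)); last lra.
rewrite -powRD; last by apply/implyP => /eqP h; exfalso; lra.
apply: ler_powR => //; lra.
Qed.

Lemma sum_bound B : \sum_(x < B | (0 < x)%N) ((x%:R : R) `^ (5/3))^-1 <= 3.
Proof.
case: B => [|[|n]]; first by rewrite big_ord0; lra.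
  by rewrite big_mkcond big_ord1 /=; lra.
rewrite big_mkcond /=.
apply: (le_trans (y := \sum_(x < n.+2) (if (0 < x)%N then g x else 0))).
  apply: ler_sum => x _; case: ifP => // x0; exact: term_le.
apply: (le_trans (tele n)).
have : 0 <= 2 / Num.sqrt (n.+1)%:R :> R by rewrite divr_ge0 // sqrtr_ge0.
lra.
Qed.


Lemma p_ge2 : (2:R) <= 3 `^ (2/3).
Proof.
set p := (3:R) `^ (2/3).
have p0 : 0 <= p by apply: powR_ge0.
have e : p ^+ 3 = 9.
  rewrite /p -powR_mulrn; last exact: powR_ge0.
  rewrite -powRrM.
  have -> : (2/3 * 3%:R : R) = 2%:R by field.
  rewrite powR_mulrn; last lra.
  rewrite expr2; lra.
move: e; rewrite !exprS expr0 mulr1 => e.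
nra.
Qed.

Lemma powR_split (x : R) : 0 <= x -> x `^ (5/3) = x * x `^ (2/3).
Proof.
move=> x0.
rewrite -{2}(powRr1 x0) -powRD; last by apply/implyP => /eqP h; exfalso; lra.
congr (_ `^ _); lra.
Qed.

Lemma main_bound B J M : ((S B J M)%:R : R) <= (M%:R / 3) `^ (5/3).
Proof.
elim: J M => [|J IH] M.
  by rewrite /S big_ord0 powR_ge0.
rewrite S_rec natrD.
have -> : ((\sum_(x < B | (0 < x)%N) S B J (M %/ (3 * x)))%:R : R) =
    \sum_(x < B | (0 < x)%N) ((S B J (M %/ (3 * x)))%:R : R) by rewrite natr_sum.
have c1 : ((cnt B 1 M)%:R : R) <= M%:R / 3.
  apply: (le_trans (y := ((M %/ 3)%N%:R))); first by rewrite ler_nat cnt1_le.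
  rewrite ler_pdivlMr // -natrM ler_nat; exact: leq_trunc_div.
case: (ltnP M 9) => hM.
  rewrite big1 ?addr0; last first.
    move=> x x0; rewrite S_small //; rewrite divnMA.
    apply: (leq_ltn_trans (leq_div _ _)); by rewrite ltn_divLR.
  case: (ltnP M 3) => h3.
    have : (cnt B 1 M <= M %/ 3)%N := cnt1_le B M.
    by rewrite divn_small // leqn0 => /eqP ->; rewrite powR_ge0.
  apply: (le_trans c1); apply: le1r_powR; last lra.
  by rewrite ler_pdivlMr // mul1r ler_nat.
set Y := (M%:R / 3 : R).
have Y3 : 3 <= Y.
  rewrite /Y ler_pdivlMr //.
  have -> : (3 * 3 : R) = 9%:R by rewrite -natrM.
  by rewrite ler_nat.
have Y0 : 0 <= Y by lra.
set r := (5/3 : R).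
have r0 : 0 <= r by rewrite /r; lra.
have hterm : forall x : 'I_B, (0 < x)%N ->
    ((S B J (M %/ (3 * x)))%:R : R) <= (Y/3) `^ r * ((x%:R : R) `^ r)^-1.
  move=> x x0.
  apply: (le_trans (IH _)).
  set q := (M %/ (3 * x))%N.
  have hq : (q * (3 * x) <= M)%N by apply: leq_trunc_div.
  have xp : (0 : R) < x%:R by rewrite ltr0n.
  have xr : (0 : R) < x%:R `^ r by rewrite powR_gt0.
  have e : (M%:R / (9 * x%:R) : R) `^ r * x%:R `^ r = (Y/3) `^ r.
    rewrite -powRM; last lra; last by rewrite divr_ge0 // mulr_ge0 //; lra.
    congr (_ `^ _); rewrite /Y; field; lra.
  rewrite -e mulfK; last by rewrite gt_eqF.
  apply: ge0_ler_powR => //.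
  - by rewrite nnegrE divr_ge0.
  - by rewrite nnegrE divr_ge0 // mulr_ge0 //; lra.
  rewrite ler_pdivlMr; last by rewrite mulr_gt0 //; lra.
  have -> : (q%:R / 3 * (9 * x%:R) : R) = (q * (3 * x))%N%:R.
    by rewrite !natrM; field.
  by rewrite ler_nat.
apply: (le_trans (lerD c1 (ler_sum _ hterm))).
rewrite -mulr_sumr.
have u0 : 0 <= (Y/3) `^ r by apply: powR_ge0.
apply: (le_trans (lerD (lexx _) (ler_wpM2l u0 (sum_bound B)))).
rewrite -/Y /r !powR_split; last lra; last lra.
set u := (Y/3) `^ (2/3).
have eu : u * 3 `^ (2/3) = Y `^ (2/3).
  rewrite /u -powRM; last lra; last lra.
  by congr (_ `^ _); rewrite divfK.
rewrite -eu.
have p2 := p_ge2.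
have u1 : 1 <= u.
  have : (1:R) `^ (2/3) <= (Y/3) `^ (2/3) by apply: ge0_ler_powR; rewrite ?nnegrE; lra.
  by rewrite powR1.
move: p2 u1; set p := 3 `^ (2/3) => p2 u1.
have h : 1 + u <= u * p by nra.
nra.
Qed.

End R.

Lemma Nstar_S (R : realType) (X : R) : 0 <= X ->
  Nstar X = S (Num.truncn X).+1 (Num.truncn X) (Num.truncn X).
Proof.
move=> X0; rewrite /Nstar /S /=.
rewrite big_add1 /= big_mkord; apply: eq_bigr => j _.
rewrite -card_cnt; apply: eq_card => t.
by rewrite !inE /good_tuple /goodn truncn_ge_nat.
Qed.

Unset Implicit Arguments.
Theorem lemma3 (R : realType) :
  (forall X : R, 0 < X -> X < 3 -> Nstar X = 0%N) /\
  (forall X : R, 0 < X -> (Nstar X)%:R <= (X / 3) `^ (5 / 3)).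
Proof.
split.
  move=> X X0 X3; rewrite Nstar_S; last exact: ltW.
  apply: S_small.
  by rewrite truncn_lt_nat //; exact: ltW.
move=> X X0; rewrite Nstar_S; last exact: ltW.
apply: (le_trans (main_bound _ _ _ _)).
have h : (Num.truncn X)%:R <= X by rewrite truncn_le; exact: ltW.
have h0 : 0 <= (Num.truncn X)%:R :> R by apply: ler0n.
apply: ge0_ler_powR; rewrite ?nnegrE; lra.
Qed.
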